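(* Let $M$ be a duplicial module in a pre-additive category, and define $D_n=\sum_{i=0}^{n-1}b_n\kappa_n^i:M_n\to M_{n-1}$ for $n\ge0$ (so $D_0=0$). Then for all $n\ge0$, $$d_{n-1}D_n+D_{n+1}d_n=1-\pi_n\qquad\text{and}\qquad D_{n-1}D_n=0\ (n\ge1).$$
   Context: Let $\mathcal A$ be a pre-additive category. Let $\Lambda_+$ be the category with objects $[n]$, $n\ge0$, where $\Lambda_+([m],[n])$ is the set of weakly monotone $f:\mathbb Z\to\mathbb Z$ with $f(j+m+1)=f(j)+n+1$ for all $j$ and $f(0)\ge0$. Define $\varepsilon^n_i:[n-1]\to[n]$ ($n\ge1$, $0\le i\le n$) by $\varepsilon^n_i(j)=j$ for $0\le j<i$, $j+1$ for $i\le j\le n-1$, and $\eta^n_i:[n+1]\to[n]$ ($0\le i\le n+1$) by $\eta^n_i(j)=j$ for $0\le j\le i$, $j-1$ for $i<j\le n+1$. A duplicial module is a functor $M:\Lambda_+^{op}\to\mathcal A$; $M_n=M([n])$, $\partial_{n,i}=M(\varepsilon^n_i):M_n\to M_{n-1}$, $s_{n,i}=M(\eta^n_i):M_n\to M_{n+1}$. Convention $M_{-1}=0$, maps into/out of it zero. Define $b_n=\sum_{i=0}^n(-1)^i\partial_{n,i}$ ($b_0=0$), $d_n=\sum_{i=0}^{n+1}(-1)^is_{n,i}$ ($d_{-1}=0$), the Karoubi operator $\kappa_n=(-1)^n(\partial_{n+1,0}s_{n,n+1}-s_{n-1,n}\partial_{n,0})$ (so $\kappa_0=\partial_{1,0}s_{0,1}$),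 and the Dwyer–Kan operator $\pi_n=(-1)^n\partial_{n+1,0}\kappa_{n+1}^n s_{n,n+1}$. *)

(* Defs.v *)
From HB Require Import structures.
From mathcomp Require Import all_boot all_order all_algebra.
Set Implicit Arguments. Unset Strict Implicit. Unset Printing Implicit Defensive.
Import Order.TTheory GRing.Theory Num.Theory.
Local Open Scope ring_scope.

Record preadditive := PreAdditive {
  Ob : Type;
  Hom : Ob -> Ob -> zmodType;
  cmp : forall a b c : Ob, Hom b c -> Hom a b -> Hom a c;
  idm : forall a : Ob, Hom a a;
  compA : forall a b c d (h : Hom c d) (g : Hom b c) (f : Hom a b),
    cmp h (cmp g f) = cmp (cmp h g) f;
  comp1m : forall a b (f : Hom a b), cmp (idm b) f = f;
  compm1 : forall a b (f : Hom a b), cmp f (idm a) = f;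
  compDl : forall a b c (g1 g2 : Hom b c) (f : Hom a b),
    cmp (g1 + g2) f = cmp g1 f + cmp g2 f;
  compDr : forall a b c (g : Hom b c) (f1 f2 : Hom a b),
    cmp g (f1 + f2) = cmp g f1 + cmp g f2 }.
Arguments Hom : clear implicits.
Arguments cmp {_ a b c}.
Arguments idm {_} a.

(** Morphisms [m] -> [n] of Lambda_+ : weakly monotone f : Z -> Z with
    f (j + m + 1) = f j + n + 1 and f 0 >= 0. *)
Definition lam_hom (m n : nat) (f : int -> int) : Prop :=
  [/\ (forall i j : int, i <= j -> f i <= f j),
      (forall j : int, f (j + m.+1%:Z) = f j + n.+1%:Z) &
      0 <= f 0].

(** The action
    is given on all functions Z -> Z, but only its values on Lambda_+
    morphisms matter (functor laws are only required there). *)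
Record duplicial (C : preadditive) := Duplicial {
  dM : nat -> Ob C;
  dact : forall m n : nat, (int -> int) -> Hom C (dM n) (dM m);
  dact_id : forall n : nat, dact n n id = idm (dM n);
  dact_comp : forall (m n p : nat) (f g : int -> int),
    lam_hom m n f -> lam_hom n p g ->
    dact m p (fun j => g (f j)) = cmp (dact m n f) (dact n p g) }.

(** epsilon^n_i : [n-1] -> [n] (source has n points, period n), given on
    0 <= j <= n-1 and extended by periodicity. *)
Definition eps (n i : nat) (j : int) : int :=
  let q := (j %/ n%:Z)%Z in let r := (j %% n%:Z)%Z in
  q * n.+1%:Z + (if r < i%:Z then r else r + 1).

(** eta^n_i : [n+1] -> [n] (source period n+2, target period n+1). *)
Definition eta (n i : nat) (j : int) : int :=
  let q := (j %/ n.+2%:Z)%Z in let r := (j %% n.+2%:Z)%Z in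
  q * n.+1%:Z + (if r <= i%:Z then r else r - 1).

Section Ops.
Variables (C : preadditive) (M : duplicial C).
Local Notation MM := (dM M).
Local Notation H := (Hom C).

Definition sgn (k : nat) : int := (-1) ^+ k.

(** del n i = partial_{n+1,i} : M_{n+1} -> M_n *)
Definition del (n i : nat) : H (MM n.+1) (MM n) := dact M n n.+1 (eps n.+1 i).
Definition sdeg (n i : nat) : H (MM n) (MM n.+1) := dact M n.+1 n (eta n i).

(** bb n = b_{n+1} *)
Definition bb (n : nat) : H (MM n.+1) (MM n) :=
  \sum_(i < n.+2) del n i *~ sgn i.
Definition dd (n : nat) : H (MM n) (MM n.+1) :=
  \sum_(i < n.+2) sdeg n i *~ sgn i.

Definition kappa (n : nat) : H (MM n) (MM n) :=
  match n as k return H (MM k) (MM k) with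
  | 0 => cmp (del 0 0) (sdeg 0 1)
  | m.+1 => (cmp (del m.+1 0) (sdeg m.+1 m.+2)
             - cmp (sdeg m m.+1) (del m 0)) *~ sgn m.+1
  end.

Definition kpow (n k : nat) : H (MM n) (MM n) :=
  iter k (fun h => cmp (kappa n) h) (idm (MM n)).

Definition piDK (n : nat) : H (MM n) (MM n) :=
  cmp (del n 0) (cmp (kpow n.+1 n) (sdeg n n.+1)) *~ sgn n.

(** DD n = D_{n+1} = sum_{i=0}^{n} b_{n+1} kappa_{n+1}^i : M_{n+1} -> M_n *)
Definition DD (n : nat) : H (MM n.+1) (MM n) :=
  \sum_(i < n.+1) cmp (bb n) (kpow n.+1 i).

(** dD n = d_{n-1} D_n : M_n -> M_n, which is 0 for n = 0 (M_{-1} = 0). *)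
Definition dD (n : nat) : H (MM n) (MM n) :=
  match n as k return H (MM k) (MM k) with
  | 0 => 0
  | m.+1 => cmp (dd m) (DD m)
  end.
End Ops.

(* Main.v *)
Require Import Defs.
From HB Require Import structures.
From mathcomp Require Import all_boot all_order all_algebra zify ring lra.
From Stdlib Require Import FunctionalExtensionality.
Set Implicit Arguments. Unset Strict Implicit. Unset Printing Implicit Defensive.
Import Order.TTheory GRing.Theory Num.Theory.
Local Open Scope ring_scope.
Import Defs.

Lemma divmod_uniq (p q r : int) : 0 < p -> 0 <= r < p ->
  ((q * p + r) %/ p)%Z = q /\ ((q * p + r) %% p)%Z = r.
Proof.
move=> p0 hr.
have hd : ((q * p + r) %/ p)%Z = q.
  rewrite divzMDl; last by rewrite gt_eqF.
  rewrite divz_small ?addr0 //.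
  have -> : (`|p|%N : int) = p by rewrite abszE ger0_norm // ltW.
  done.
split=> //.
have := divz_eq (q * p + r) p; rewrite hd => h.
by move/addrI: h.
Qed.

Lemma eps_val (n i : nat) (q r : int) : (0 < n)%N -> 0 <= r < n%:Z ->
  eps n i (q * n%:Z + r) = q * n.+1%:Z + (if r < i%:Z then r else r + 1).
Proof.
move=> n0 hr; rewrite /eps.
have p0 : 0 < n%:Z by rewrite ltz_nat.
have [-> ->] := divmod_uniq q p0 hr.
done.
Qed.

Definition ext (p P : int) (u : int -> int) (x : int) : int :=
  (x %/ p)%Z * P + u (x %% p)%Z.

Lemma eps_ext (n i : nat) (x : int) : eps n i x = ext n%:Z n.+1%:Z (fun r => if r < i%:Z then r else r + 1) x.
Proof. by []. Qed.
Lemma eta_ext (n i : nat) (x : int) : eta n i x = ext n.+2%:Z n.+1%:Z (fun r => if r <= i%:Z then r else r - 1) x.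
Proof. by []. Qed.

Lemma ext_dec (p : int) x : 0 < p -> exists q r, x = q * p + r /\ 0 <= r < p.
Proof.
move=> p0; exists (x %/ p)%Z, (x %% p)%Z; split; first exact: divz_eq.
by rewrite modz_ge0 ?gt_eqF // ltz_pmod.
Qed.

Lemma ext_val p P u q r : 0 < p -> 0 <= r < p -> ext p P u (q * p + r) = q * P + u r.
Proof. by move=> p0 hr; rewrite /ext; have [-> ->] := divmod_uniq q p0 hr. Qed.

Lemma ext_at p P u x q r : 0 < p -> 0 <= r < p -> x = q * p + r -> ext p P u x = q * P + u r.
Proof. by move=> p0 hr ->; apply: ext_val. Qed.

Lemma ext_per p P u x : 0 < p -> ext p P u (x + p) = ext p P u x + P.
Proof.
move=> p0; have [q [r [-> hr]]] := ext_dec x p0.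
have -> : q * p + r + p = (q + 1) * p + r by ring.
by rewrite !ext_val // mulrDl mul1r addrAC.
Qed.

Lemma ext_mono (p P : int) (u : int -> int) : 0 < p -> 0 <= P ->
  (forall r1 r2, 0 <= r1 -> r1 <= r2 -> r2 < p -> u r1 <= u r2) ->
  (forall r, 0 <= r < p -> u r <= u 0 + P) ->
  forall x y, x <= y -> ext p P u x <= ext p P u y.
Proof.
move=> p0 P0 um ub x y hxy.
have [q1 [r1 [ex hr1]]] := ext_dec x p0.
have [q2 [r2 [ey hr2]]] := ext_dec y p0.
rewrite ex ey !ext_val //.
have hq : q1 <= q2 by move: hxy; rewrite ex ey => *; nia.
case: (eqVneq q1 q2) => [eqq|hne].
  subst q2; rewrite lerD2l; apply: um; move: hxy; rewrite ex ey => *; nia.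
have hq' : q1 + 1 <= q2 by lia.
have h1 := ub r1 hr1.
have h2 : u 0 <= u r2 by apply: um; move: hr2 => *; lia.
have h3 : (q1 + 1) * P <= q2 * P by nia.
lia.
Qed.

Lemma lam_eps (n i : nat) : lam_hom n n.+1 (eps n.+1 i).
Proof.
have p0 : 0 < n.+1%:Z by [].
split.
- move=> x y hxy; rewrite !eps_ext; apply: ext_mono => //.
  + move=> r1 r2 *; (repeat case: ifP => ?); lia.
  + move=> r hr; rewrite ltz_nat; (repeat case: ifP => ?); lia.
- by move=> j; rewrite !eps_ext ext_per.
- rewrite eps_ext (_ : 0 = 0 * n.+1%:Z + 0) // ext_val //.
  by case: ifP.
Qed.

Lemma lam_eta (n i : nat) : lam_hom n.+1 n (eta n i).
Proof.
have p0 : 0 < n.+2%:Z by [].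
split.
- move=> x y hxy; rewrite !eta_ext; apply: ext_mono => //.
  + move=> r1 r2 *; (repeat case: ifP => ?); lia.
  + move=> r hr; rewrite (_ : (0 <= i%:Z) = true) //; (repeat case: ifP => ?); lia.
- by move=> j; rewrite !eta_ext ext_per.
- rewrite eta_ext (_ : 0 = 0 * n.+2%:Z + 0) // ext_val //.
Qed.

Lemma eps_eval (n i : nat) (x : int) : (0 < n)%N -> (i <= n)%N -> 0 <= x <= n%:Z ->
  eps n i x = (if x < i%:Z then x else x + 1) + (if (x == n%:Z) && (i == 0%N) then 1 else 0).
Proof.
move=> n0 iln hx; have p0 : 0 < n%:Z by rewrite ltz_nat.
rewrite eps_ext.
case: (eqVneq x n%:Z) => [->|hxn].
  rewrite (@ext_at _ _ _ _ 1 0) //=; last by rewrite mul1r addr0.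
  rewrite mul1r.
  case: (eqVneq i 0%N) => [->|hi0] /=; first by lia.
  by (repeat case: ifP => ?); lia.
rewrite (@ext_at _ _ _ _ 0 x) //; last by rewrite mul0r add0r.
  by rewrite mul0r add0r /= addr0.
by move: hx hxn => /andP[? ?] ?; apply/andP; split=> //; lia.
Qed.

Lemma eta_eval (n i : nat) (x : int) : (i <= n.+1)%N -> 0 <= x <= n.+2%:Z ->
  eta n i x = if x <= i%:Z then x else x - 1.
Proof.
move=> iln hx; have p0 : 0 < n.+2%:Z by [].
rewrite eta_ext.
case: (eqVneq x n.+2%:Z) => [->|hxn].
  rewrite (@ext_at _ _ _ _ 1 0) //=; last by rewrite mul1r addr0.
  by (repeat case: ifP => ?); lia.
rewrite (@ext_at _ _ _ _ 0 x) //; last by rewrite mul0r add0r.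
  by rewrite mul0r add0r.
by move: hx hxn => /andP[? ?] ?; apply/andP; split=> //; lia.
Qed.

Lemma per_agree (m p : nat) (h h' : int -> int) :
  (forall x, h (x + m.+1%:Z) = h x + p.+1%:Z) ->
  (forall x, h' (x + m.+1%:Z) = h' x + p.+1%:Z) ->
  (forall r, 0 <= r <= m%:Z -> h r = h' r) -> forall x, h x = h' x.
Proof.
move=> hp hp' hr x.
pose e y := h y - h' y.
have ep y : e (y + m.+1%:Z) = e y.
  by rewrite /e hp hp' opprD addrACA subrr addr0.
have key : forall r (k : nat), e (r + k%:Z * m.+1%:Z) = e r /\ e (r - k%:Z * m.+1%:Z) = e r.
  move=> r; elim=> [|k [IH1 IH2]]; first by split; congr e; ring.
  split.
    by rewrite -IH1 -[in RHS]ep; congr e; rewrite intS; ring.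
  rewrite -IH2 -[in LHS]ep; congr e.
  rewrite intS; ring.
have p0 : 0 < m.+1%:Z by [].
have [q [r [ex hr0]]] := ext_dec x p0.
have er : e x = e r.
  rewrite ex addrC; case: q {ex} => k.
    by have [-> _] := key r k.
  rewrite NegzE mulNr; by have [_ ->] := key r k.+1.
apply/eqP; rewrite -subr_eq0; apply/eqP; rewrite -/(e x) er /e hr ?subrr //.
Qed.

Section Rel.
Variables (C : preadditive) (M : duplicial C).

Lemma lam_shift a b f : lam_hom a b f -> forall x, f (x + a.+1%:Z) = f x + b.+1%:Z.
Proof. by case. Qed.

Lemma rel (a b b' c : nat) f g f' g' :
  lam_hom a b f -> lam_hom b c g -> lam_hom a b' f' -> lam_hom b' c g' ->
  (forall r, 0 <= r <= a%:Z -> g (f r) = g' (f' r)) ->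
  cmp (dact M a b f) (dact M b c g) = cmp (dact M a b' f') (dact M b' c g').
Proof.
move=> hf hg hf' hg' hr.
rewrite -!dact_comp //; congr dact; apply: functional_extensionality.
apply: (per_agree (m:=a) (p:=c)) => // x.
  by rewrite (lam_shift hf) (lam_shift hg).
by rewrite (lam_shift hf') (lam_shift hg').
Qed.

Lemma rel_id (a b : nat) f g :
  lam_hom a b f -> lam_hom b a g -> (forall r, 0 <= r <= a%:Z -> g (f r) = r) ->
  cmp (dact M a b f) (dact M b a g) = idm (dM M a).
Proof.
move=> hf hg hr.
rewrite -dact_comp // -dact_id; congr dact; apply: functional_extensionality.
apply: (per_agree (m:=a) (p:=a)) => // x.
by rewrite (lam_shift hf) (lam_shift hg).
Qed.
End Rel.

Ltac solve_vals r :=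
  (rewrite ?[eps _ _ r]eps_eval ?[Defs.eta _ _ r]eta_eval; try lia);
  (repeat case: ifP => ?);
  (rewrite ?eps_eval ?eta_eval; try lia);
  (repeat case: ifP => ?); lia.

Section Simp.
Variables (C : preadditive) (M : duplicial C).
Local Notation del := (del M).
Local Notation sdeg := (sdeg M).

Lemma S1 n i j : (i < j)%N -> (j <= n.+2)%N ->
  cmp (del n i) (del n.+1 j) = cmp (del n j.-1) (del n.+1 i).
Proof.
move=> hij hj; apply: rel; try apply: lam_eps.
move=> r hr; solve_vals r.
Qed.

Lemma S2 n i j : (i <= j)%N -> (j <= n.+1)%N ->
  cmp (sdeg n.+1 i) (sdeg n j) = cmp (sdeg n.+1 j.+1) (sdeg n i).
Proof.
move=> hij hj; apply: rel; try apply: lam_eta.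
move=> r hr; solve_vals r.
Qed.

Lemma S4a n j : (j <= n.+1)%N -> cmp (del n j) (sdeg n j) = idm (dM M n).
Proof.
move=> hj; apply: rel_id; [apply: lam_eps|apply: lam_eta|].
move=> r hr; solve_vals r.
Qed.

Lemma S4b n j : (j <= n)%N -> cmp (del n j.+1) (sdeg n j) = idm (dM M n).
Proof.
move=> hj; apply: rel_id; [apply: lam_eps|apply: lam_eta|].
move=> r hr; solve_vals r.
Qed.

Lemma S3 m i j : (i < j)%N -> (j <= m.+2)%N -> ~~ ((i == 0%N) && (j == m.+2)) ->
  cmp (del m.+1 i) (sdeg m.+1 j) = cmp (sdeg m j.-1) (del m i).
Proof.
move=> hij hj hex; apply: rel; try apply: lam_eps; try apply: lam_eta.
move=> r hr; solve_vals r.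
Qed.

Lemma S5 m i j : (j.+1 < i)%N -> (i <= m.+2)%N ->
  cmp (del m.+1 i) (sdeg m.+1 j) = cmp (sdeg m j) (del m i.-1).
Proof.
move=> hij hj; apply: rel; try apply: lam_eps; try apply: lam_eta.
move=> r hr; solve_vals r.
Qed.
End Simp.

Lemma sgnS k : sgn k.+1 = - sgn k.
Proof. by rewrite /sgn exprS mulN1r. Qed.
Lemma sgnD i j : sgn (i + j) = sgn i * sgn j.
Proof. by rewrite /sgn exprD. Qed.
Lemma sgn_sq k : sgn k * sgn k = 1.
Proof. by rewrite /sgn -exprMn mulrNN mulr1 expr1n. Qed.
Lemma mulrz_sgnS (V : zmodType) (x : V) k : x *~ sgn k.+1 = - (x *~ sgn k).
Proof. by rewrite sgnS mulrNz. Qed.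

Lemma G2 (V : zmodType) (N : nat) (P Q : nat -> nat -> V) :
 (forall j, (j <= N)%N -> P j j = P j.+1 j) ->
 (forall i j, (i < j)%N -> (j <= N)%N -> P i j = Q j.-1 i) ->
 (forall i j, (j.+1 < i)%N -> (i <= N.+1)%N -> P i j = Q j i.-1) ->
 \sum_(0 <= j < N.+1) \sum_(0 <= i < N.+2) P i j *~ sgn (i + j)
 + \sum_(0 <= j < N) \sum_(0 <= i < N.+1) Q j i *~ sgn (i + j) = 0.
Proof.
move=> h1 h2 h3.
have inner : forall j, (0 <= j < N.+1)%N ->
  \sum_(0 <= i < N.+2) P i j *~ sgn (i + j) =
  \sum_(0 <= i < j) Q j.-1 i *~ sgn (i + j) +
  \sum_(j.+1 <= k < N.+1) - (Q j k *~ sgn (k + j)).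
  move=> j /andP[_ hj].
  rewrite (big_cat_nat _ (n:=j)) //=; last by lia.
  congr (_ + _).
    by apply: eq_big_nat => i /andP[_ hi]; rewrite h2 //; lia.
  rewrite big_ltn; last by lia.
  rewrite big_ltn; last by lia.
  rewrite -h1; last by lia.
  rewrite addrA (_ : j.+1 + j = (j + j).+1)%N; last by lia.
  rewrite mulrz_sgnS subrr add0r.
  rewrite big_add1 /=.
  apply: eq_big_nat => i /andP[hi1 hi2].
  rewrite h3; [|lia|lia].
  by rewrite /= addSn mulrz_sgnS.
rewrite (eq_big_nat _ _ inner) big_split /=.
rewrite big_nat_recl // big_geq // add0r.
rewrite big_nat_recr //= [\sum_(N.+1 <= k < N.+1) _]big_geq // addr0.
rewrite -big_split /= -big_split /=.
apply: big1_seq => j /andP[_]; rewrite mem_index_iota => /andP[_ hj].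
rewrite [\sum_(j.+1 <= k < N.+1) _](eq_bigr (fun k => Q j k *~ sgn (k + j.+1))); last first.
  by move=> k _; rewrite addnS mulrz_sgnS.
rewrite -(big_cat_nat _ (n:=j.+1)) //=; last by lia.
rewrite -big_split /=; apply: big1_seq => i _.
by rewrite addnS mulrz_sgnS addNr.
Qed.

Lemma tri (V : zmodType) n (H : nat -> nat -> V) :
  \sum_(0 <= i < n) \sum_(0 <= j < i.+1) H i j =
  \sum_(0 <= j < n) \sum_(j <= i < n) H i j.
Proof.
elim: n => [|n IH]; first by rewrite !big_geq.
rewrite big_nat_recr //= IH.
rewrite [RHS](eq_big_nat _ _ (F2 := fun j => \sum_(j <= i < n) H i j + H n j)); last first.
  by move=> j /andP[_ hj]; rewrite big_nat_recr.
rewrite big_split /=; congr (_ + _).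
by rewrite [in RHS]big_nat_recr //= [X in _ + X]big_geq // addr0.
Qed.

Lemma G1 (V : zmodType) (N : nat) (G : nat -> nat -> V) :
  (forall i j, (i < j)%N -> (j <= N.+1)%N -> G i j = G j.-1 i) ->
  \sum_(0 <= i < N.+1) \sum_(0 <= j < N.+2) G i j *~ sgn (i + j) = 0.
Proof.
move=> h.
have inner : forall i, (0 <= i < N.+1)%N ->
  \sum_(0 <= j < N.+2) G i j *~ sgn (i + j) =
  \sum_(0 <= j < i.+1) G i j *~ sgn (i + j) -
  \sum_(i <= k < N.+1) G k i *~ sgn (k + i).
  move=> i /andP[_ hi].
  rewrite (big_cat_nat _ (n:=i.+1)) //=; last by lia.
  congr (_ + _).
  rewrite big_add1 /= -sumrN.
  apply: eq_big_nat => k /andP[hk1 hk2].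
  by rewrite h //= addnS mulrz_sgnS addnC.
rewrite (eq_big_nat _ _ inner) sumrB tri.
by rewrite subrr.
Qed.

Section Cat.
Variable C : preadditive.
Implicit Types a b c : Ob C.

Lemma cmp0l a b c (f : Hom C a b) : cmp (0 : Hom C b c) f = 0.
Proof. by apply: (addrI (cmp (0 : Hom C b c) f)); rewrite -compDl !addr0. Qed.
Lemma cmp0r a b c (g : Hom C b c) : cmp g (0 : Hom C a b) = 0.
Proof. by apply: (addrI (cmp g (0 : Hom C a b))); rewrite -compDr !addr0. Qed.
Lemma cmpNl a b c (g : Hom C b c) (f : Hom C a b) : cmp (- g) f = - cmp g f.
Proof. by apply: (addrI (cmp g f)); rewrite -compDl !subrr cmp0l. Qed.
Lemma cmpNr a b c (g : Hom C b c) (f : Hom C a b) : cmp g (- f) = - cmp g f.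
Proof. by apply: (addrI (cmp g f)); rewrite -compDr !subrr cmp0r. Qed.
Lemma cmpBl a b c (g1 g2 : Hom C b c) (f : Hom C a b) : cmp (g1 - g2) f = cmp g1 f - cmp g2 f.
Proof. by rewrite compDl cmpNl. Qed.
Lemma cmpBr a b c (g : Hom C b c) (f1 f2 : Hom C a b) : cmp g (f1 - f2) = cmp g f1 - cmp g f2.
Proof. by rewrite compDr cmpNr. Qed.
Lemma cmpnl a b c (g : Hom C b c) (f : Hom C a b) k : cmp (g *+ k) f = cmp g f *+ k.
Proof. by elim: k => [|k IH]; rewrite ?cmp0l // !mulrS compDl IH. Qed.
Lemma cmpnr a b c (g : Hom C b c) (f : Hom C a b) k : cmp g (f *+ k) = cmp g f *+ k.
Proof. by elim: k => [|k IH]; rewrite ?cmp0r // !mulrS compDr IH. Qed.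
Lemma cmpzl a b c (g : Hom C b c) (f : Hom C a b) z : cmp (g *~ z) f = cmp g f *~ z.
Proof. by case: z => k; rewrite ?NegzE ?mulrNz ?cmpNl -!pmulrn cmpnl. Qed.
Lemma cmpzr a b c (g : Hom C b c) (f : Hom C a b) z : cmp g (f *~ z) = cmp g f *~ z.
Proof. by case: z => k; rewrite ?NegzE ?mulrNz ?cmpNr -!pmulrn cmpnr. Qed.
Lemma cmp_suml a b c (I : Type) (r : seq I) (P : pred I) (F : I -> Hom C b c) (f : Hom C a b) :
  cmp (\sum_(i <- r | P i) F i) f = \sum_(i <- r | P i) cmp (F i) f.
Proof.
by apply: (big_morph (fun g => cmp g f)) => [x y|]; rewrite ?compDl ?cmp0l.
Qed.
Lemma cmp_sumr a b c (I : Type) (r : seq I) (P : pred I) (F : I -> Hom C a b) (g : Hom C b c) :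
  cmp g (\sum_(i <- r | P i) F i) = \sum_(i <- r | P i) cmp g (F i).
Proof.
by apply: (big_morph (fun f => cmp g f)) => [x y|]; rewrite ?compDr ?cmp0r.
Qed.
End Cat.

Lemma zr (V : zmodType) (A A' K S I : V) : A + A' = 0 -> A + (- K - S + I) + (A' + S) = I - K.
Proof. by move=> h; rewrite addrACA h add0r addrAC subrK addrC. Qed.

Lemma zr2 (V : zmodType) (A K1 K2 X : V) : A - K1 + (K1 - K2 - X) = A - (K2 + X).
Proof. by rewrite !addrA subrK opprD addrA. Qed.

Section Main.
Variables (C : preadditive) (M : duplicial C).
Local Notation del := (Defs.del M).
Local Notation sdeg := (Defs.sdeg M).
Local Notation bb := (Defs.bb M).
Local Notation dd := (Defs.dd M).
Local Notation kappa := (Defs.kappa M).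
Local Notation kpow := (Defs.kpow M).
Local Notation MM := (dM M).

Definition dp (n : nat) : Hom C (MM n) (MM n.+1) := \sum_(i < n.+1) sdeg n i *~ sgn i.

Lemma bbE n : bb n = \sum_(0 <= i < n.+2) del n i *~ sgn i.
Proof. by rewrite big_mkord. Qed.
Lemma ddE n : dd n = \sum_(0 <= i < n.+2) sdeg n i *~ sgn i.
Proof. by rewrite /dd big_mkord. Qed.
Lemma dpE n : dp n = \sum_(0 <= i < n.+1) sdeg n i *~ sgn i.
Proof. by rewrite /dp big_mkord. Qed.
Lemma dd_dp n : dd n = dp n + sdeg n n.+1 *~ sgn n.+1.
Proof. by rewrite ddE dpE big_nat_recr. Qed.

Lemma cmp_sums (a b c : Ob C) (F : nat -> Hom C b c) (G : nat -> Hom C a b) m n :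
  cmp (\sum_(0 <= i < m) F i *~ sgn i) (\sum_(0 <= j < n) G j *~ sgn j) =
  \sum_(0 <= i < m) \sum_(0 <= j < n) cmp (F i) (G j) *~ sgn (i + j).
Proof.
rewrite cmp_suml; apply: eq_bigr => i _.
rewrite cmpzl cmp_sumr mulrz_suml; apply: eq_bigr => j _.
by rewrite cmpzr sgnD mulrzA_C mulrC.
Qed.

Lemma Lbb n : cmp (bb n) (bb n.+1) = 0.
Proof.
rewrite !bbE cmp_sums; apply: (G1 (N := n.+1)) => i j hij hj.
by rewrite S1.
Qed.

Lemma Ldd n : cmp (dd n.+1) (dd n) = 0.
Proof.
rewrite !ddE cmp_sums exchange_big_nat /=.
rewrite (eq_bigr (fun j => \sum_(0 <= i < n.+3) (fun j i => cmp (sdeg n.+1 i) (sdeg n j)) j i *~ sgn (j + i))); last first.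
  by move=> j _; apply: eq_bigr => i _; rewrite addnC.
apply: (G1 (N := n.+1)) => j i hij hi /=.
rewrite [RHS]S2 ?prednK //; lia.
Qed.

Lemma Lbdp0 : cmp (bb 0) (dp 0) = 0.
Proof.
rewrite bbE dpE cmp_suml !big_nat_recl // !big_geq // !addr0 !cmpzl !cmpzr S4a //.
rewrite (S4b _ (n := 0) (j := 0)) // /sgn expr0 expr1 !mulr1z mulrN1z.
by rewrite subrr.
Qed.

Lemma Lbdp m : cmp (bb m.+1) (dp m.+1) + cmp (dp m) (bb m) = 0.
Proof.
rewrite !bbE !dpE !cmp_sums [X in X + _]exchange_big_nat /=.
rewrite [X in _ + X](eq_bigr (fun i => \sum_(0 <= j < m.+2) cmp (sdeg m i) (del m j) *~ sgn (j + i))); last first.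
  by move=> i _; apply: eq_bigr => j _; rewrite addnC.
apply: (G2 (N := m.+1) (P := fun i j => cmp (del m.+1 i) (sdeg m.+1 j))
           (Q := fun j i => cmp (sdeg m j) (del m i))).
- by move=> j hj /=; rewrite S4a ?S4b //; lia.
- by move=> i j hij hj /=; rewrite S3 //; lia.
- by move=> i j hij hi /=; rewrite S5.
Qed.

Lemma bs0 : cmp (bb 0) (sdeg 0 1) = kappa 0 - idm (MM 0).
Proof.
rewrite bbE cmp_suml !big_nat_recl // big_geq // addr0 !cmpzl S4a //=.
Qed.

Lemma bsS m : cmp (bb m.+1) (sdeg m.+1 m.+2) =
  kappa m.+1 *~ sgn m.+1 + cmp (sdeg m m.+1) (bb m) + idm (MM m.+1) *~ sgn m.+2.
Proof.
rewrite /= -mulrzA sgn_sq mulr1z.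
rewrite !bbE cmp_suml cmp_sumr big_nat_recl // big_nat_recr //=.
rewrite [in RHS]big_nat_recl //.
rewrite (eq_big_nat _ _ (F1 := fun i => cmp (del m.+1 i.+1 *~ sgn i.+1) (sdeg m.+1 m.+2))
   (F2 := fun i => cmp (sdeg m m.+1) (del m i.+1 *~ sgn i.+1))); last first.
  by move=> i hi; rewrite cmpzl cmpzr S3 //; lia.
rewrite !cmpzl !cmpzr S4a // /sgn expr0 !mulr1z.
by rewrite addrA [X in _ = X + _]addrA subrK.
Qed.

Lemma Lbd0 : cmp (bb 0) (dd 0) = idm (MM 0) - kappa 0.
Proof.
rewrite dd_dp compDr Lbdp0 add0r cmpzr bs0 /sgn expr1 mulrN1z.
by rewrite opprB.
Qed.

Lemma LbdS m : cmp (bb m.+1) (dd m.+1) + cmp (dd m) (bb m) = idm (MM m.+1) - kappa m.+1.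
Proof.
have E := Lbdp m.
rewrite !dd_dp compDr compDl !cmpzr !cmpzl bsS.
rewrite (sgnS m.+1) !mulrzDl !mulrNz -!mulrzA sgn_sq mulr1.
rewrite mulNrz -mulrzA sgn_sq mulr1z opprK.
exact: zr.
Qed.

Lemma kap0E : kappa 0 = idm (MM 0) - cmp (bb 0) (dd 0).
Proof. by rewrite Lbd0 opprB addrC subrK. Qed.

Lemma kapSE m : kappa m.+1 = idm (MM m.+1) - (cmp (bb m.+1) (dd m.+1) + cmp (dd m) (bb m)).
Proof. by rewrite LbdS opprB addrC subrK. Qed.

Lemma Kb n : cmp (kappa n) (bb n) = cmp (bb n) (kappa n.+1).
Proof.
case: n => [|m].
  rewrite kap0E kapSE cmpBl cmpBr comp1m compm1 compDr.
  rewrite !compA Lbb cmp0l add0r.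
  done.
rewrite !kapSE cmpBl cmpBr comp1m compm1 compDr compDl.
rewrite !compA Lbb cmp0l add0r.
by rewrite -[cmp (cmp (dd m) (bb m)) _]compA Lbb cmp0r addr0.
Qed.

Lemma Kd n : cmp (kappa n.+1) (dd n) = cmp (dd n) (kappa n).
Proof.
case: n => [|m].
  rewrite kap0E kapSE cmpBl cmpBr comp1m compm1 compDl.
  rewrite -!compA Ldd cmp0r add0r.
  by rewrite compA.
rewrite !kapSE cmpBl cmpBr comp1m compm1 compDr compDl.
rewrite -!compA Ldd cmp0r add0r.
by rewrite [cmp (dd m.+1) (cmp (dd m) _)]compA Ldd cmp0l addr0 !compA.
Qed.

Lemma kpowS' n k : kpow n k.+1 = cmp (kpow n k) (kappa n).
Proof.
elim: k => [|k IH]; first by rewrite /= compm1 comp1m.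
change (cmp (kappa n) (kpow n k.+1) = cmp (kpow n k.+1) (kappa n)).
by rewrite [in LHS]IH compA.
Qed.

Lemma Kbpow n k : cmp (kpow n k) (bb n) = cmp (bb n) (kpow n.+1 k).
Proof.
elim: k => [|k IH]; first by rewrite /= comp1m compm1.
change (cmp (cmp (kappa n) (kpow n k)) (bb n) = cmp (bb n) (cmp (kappa n.+1) (kpow n.+1 k))).
by rewrite -compA IH compA Kb -compA.
Qed.

Lemma Kdpow n k : cmp (kpow n.+1 k) (dd n) = cmp (dd n) (kpow n k).
Proof.
elim: k => [|k IH]; first by rewrite /= comp1m compm1.
change (cmp (cmp (kappa n.+1) (kpow n.+1 k)) (dd n) = cmp (dd n) (cmp (kappa n) (kpow n k))).
by rewrite -compA IH compA Kd -compA.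
Qed.

Lemma Ks0 m : cmp (kappa m.+1) (sdeg m 0) = 0.
Proof.
rewrite [kappa _]/= cmpzl cmpBl -!compA.
rewrite -(S2 M (n := m) (i := 0) (j := m.+1)) //.
rewrite compA S4a // comp1m S4a // compm1 subrr.
by rewrite mul0rz.
Qed.

Lemma KsS m j : (0 < j)%N -> (j <= m)%N ->
  cmp (kappa m.+1) (sdeg m j) = - cmp (sdeg m j.-1) (kappa m).
Proof.
case: m => [|k] hj hjm; first by lia.
rewrite [kappa k.+2]/= [kappa k.+1]/= cmpzl cmpzr cmpBl cmpBr -!compA.
rewrite -(S2 M (n := k.+1) (i := j) (j := k.+2)); [|lia|lia].
rewrite compA S3; [|lia|lia|lia].
rewrite -compA.
rewrite (S3 M (m := k) (i := 0) (j := j)); [|lia|lia|lia].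
rewrite [cmp (sdeg k.+1 k.+2) _]compA -(S2 M (n := k) (i := j.-1) (j := k.+1)); [|lia|lia].
rewrite -compA.
by rewrite (sgnS k.+1) mulrNz.
Qed.

Lemma Kpow_s m j k : (j <= m)%N -> (j < k)%N -> cmp (kpow m.+1 k) (sdeg m j) = 0.
Proof.
elim: j k => [|j IH] [|k] hjm hjk //.
  by rewrite kpowS' -compA Ks0 cmp0r.
rewrite kpowS' -compA KsS // cmpNr.
rewrite compA IH ?cmp0l ?oppr0 //; lia.
Qed.

Lemma Kpow_dp m : cmp (kpow m.+1 m.+1) (dp m) = 0.
Proof.
rewrite dpE cmp_sumr big1_seq // => j; rewrite mem_index_iota => /andP[_ hj].
by rewrite cmpzr Kpow_s // mul0rz.
Qed.

Lemma dKtop n : cmp (del n n.+1) (kappa n.+1) = 0.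
Proof.
rewrite [kappa _]/= cmpzr cmpBr !compA.
rewrite -(S1 M (n := n) (i := 0) (j := n.+2)) // -compA S4a // compm1.
by rewrite S4a // comp1m subrr mul0rz.
Qed.

Lemma dKi n i : (0 < i)%N -> (i <= n)%N ->
  cmp (del n i) (kappa n.+1) = - cmp (kappa n) (del n i.+1).
Proof.
case: n => [|k] hi hin; first by lia.
rewrite [kappa k.+2]/= [kappa k.+1]/= cmpzr cmpzl cmpBr cmpBl !compA.
rewrite -(S1 M (n := k.+1) (i := 0) (j := i.+1)); try lia.
rewrite -[cmp (cmp (del k.+1 0) _) _]compA (S3 M (m := k.+1) (i := i.+1) (j := k.+3)); [|lia|lia|lia].
rewrite (S3 M (m := k) (i := i) (j := k.+2)); [|lia|lia|lia].
rewrite /= -[cmp (cmp (sdeg k k.+1) _) (del k.+1 0)]compA.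
rewrite -(S1 M (n := k) (i := 0) (j := i.+1)) // !compA.
by rewrite (sgnS k.+1) mulrNz.
Qed.

Lemma dKpow n k i : (0 < i)%N -> (i <= n.+1)%N ->
  cmp (del n i) (kpow n.+1 k) =
  if (i + k <= n.+1)%N then cmp (kpow n k) (del n (i + k)) *~ sgn k else 0.
Proof.
elim: k i => [|k IH] i hi hin.
  by rewrite /= compm1 comp1m addn0 hin /sgn expr0 mulr1z.
change (cmp (del n i) (cmp (kappa n.+1) (kpow n.+1 k)) =
  (if (i + k.+1 <= n.+1)%N then cmp (cmp (kappa n) (kpow n k)) (del n (i + k.+1)) *~ sgn k.+1 else 0)).
rewrite compA.
case: (eqVneq i n.+1) => [->|hne].
  by rewrite dKtop cmp0l (_ : (n.+1 + k.+1 <= n.+1)%N = false) //; lia.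
rewrite dKi; [|lia|lia].
rewrite cmpNl -compA IH; [|lia|lia].
rewrite addSnnS; case: ifP => _; last by rewrite cmp0r oppr0.
by rewrite cmpzr compA (sgnS k) mulrNz.
Qed.

Lemma d0Kpow n : cmp (del n 0) (kpow n.+1 n) =
  cmp (kpow n n) (bb n) + cmp (kpow n n) (del n n.+1) *~ sgn n.
Proof.
rewrite Kbpow bbE cmp_suml big_nat_recl // big_nat_recl //.
rewrite big1_seq; last first.
  move=> i; rewrite mem_index_iota => /andP[_ hi]; rewrite cmpzl dKpow //; try lia.
  by rewrite (_ : (i.+2 + n <= n.+1)%N = false) ?mul0rz //; lia.
rewrite addr0 !cmpzl (@dKpow n n 1) // (_ : (1 + n <= n.+1)%N = true) //.
rewrite /sgn expr0 mulr1z expr1 mulrN1z -/(sgn n) add1n.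
  by rewrite subrK.
by lia.
Qed.

Lemma piE n : piDK M n = cmp (kpow n n) (cmp (bb n) (sdeg n n.+1)) *~ sgn n + kpow n n.
Proof.
rewrite /piDK compA d0Kpow compDl cmpzl mulrzDl -mulrzA sgn_sq mulr1z.
by rewrite -!compA S4a // compm1.
Qed.

Lemma pi0 : piDK M 0 = kappa 0.
Proof.
rewrite piE bs0 /= comp1m /sgn expr0 mulr1z.
by rewrite subrK.
Qed.

Lemma piS m : piDK M m.+1 =
  kpow m.+1 m.+2 + cmp (kpow m.+1 m.+1) (cmp (sdeg m m.+1) (bb m)) *~ sgn m.+1.
Proof.
rewrite piE bsS !compDr [cmp _ (kappa m.+1 *~ _)]cmpzr -kpowS'.
rewrite [cmp _ (idm _ *~ _)]cmpzr compm1 !mulrzDl.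
rewrite -!mulrzA sgn_sq !mulr1z.
rewrite (sgnS m.+1) mulNr sgn_sq mulrN1z.
by rewrite -addrA addNr addr0.
Qed.

Lemma keyX m : cmp (cmp (dd m) (bb m)) (kpow m.+1 m.+1) =
  cmp (kpow m.+1 m.+1) (cmp (sdeg m m.+1) (bb m)) *~ sgn m.+1.
Proof.
rewrite -compA -Kbpow compA -Kdpow -compA dd_dp compDl compDr.
rewrite [cmp (kpow _ _) (cmp (dp m) _)]compA Kpow_dp cmp0l add0r.
by rewrite cmpzl cmpzr.
Qed.

Lemma tele n m : \sum_(i < m) (kpow n i - kpow n i.+1) = idm (MM n) - kpow n m.
Proof.
rewrite -(big_mkord xpredT (fun i => kpow n i - kpow n i.+1)).
rewrite (telescope_sumr_eq (fun k => - kpow n k)) //.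
  by rewrite /= opprK addrC.
by move=> k _; rewrite opprK addrC.
Qed.

Lemma main1 n : dD M n + cmp (DD M n) (dd n) = idm (MM n) - piDK M n.
Proof.
case: n => [|m].
  rewrite /= add0r /DD big_ord1 /= compm1 Lbd0 pi0.
  done.
change (cmp (dd m) (DD M m) + cmp (DD M m.+1) (dd m.+1) = idm (MM m.+1) - piDK M m.+1).
rewrite /DD cmp_sumr cmp_suml [X in _ + X]big_ord_recr.
rewrite (eq_bigr (fun i : 'I_m.+1 => cmp (cmp (dd m) (bb m)) (kpow m.+1 i))); last first.
  by move=> i _; rewrite compA.
rewrite [X in _ + (X + _)](eq_bigr (fun i : 'I_m.+1 => cmp (cmp (bb m.+1) (dd m.+1)) (kpow m.+1 i))); last first.
  by move=> i _; rewrite -compA Kdpow compA.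
rewrite -compA Kdpow compA.
rewrite addrA -big_split /=.
rewrite (eq_bigr (fun i : 'I_m.+1 => kpow m.+1 i - kpow m.+1 i.+1)); last first.
  by move=> i _; rewrite -compDl addrC LbdS cmpBl comp1m.
rewrite tele.
have E : cmp (bb m.+1) (dd m.+1) = idm (MM m.+1) - kappa m.+1 - cmp (dd m) (bb m).
  by rewrite -LbdS addrK.
rewrite E !cmpBl comp1m keyX piS.
exact: zr2.
Qed.

Lemma main2 n : cmp (DD M n) (DD M n.+1) = 0.
Proof.
rewrite /DD cmp_suml; apply: big1 => i _.
rewrite cmp_sumr; apply: big1 => j _.
rewrite -compA [cmp (kpow _ _) (cmp (bb _) _)]compA Kbpow.
by rewrite -compA compA Lbb cmp0l.
Qed.
End Main.

Theorem mainTheorem18 (C : preadditive) (M : duplicial C) :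
  (forall n : nat,
     dD M n + cmp (DD M n) (dd M n) = idm (dM M n) - piDK M n) /\
  (forall n : nat, cmp (DD M n) (DD M n.+1) = 0).
Proof. split; [exact: main1 | exact: main2]. Qed.
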